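(* For all integers $m\geq0$ and all $x$ with $0<|x|<1/4$, \[ \sum_{n=0}^\infty\binom{2n}{n}\frac{O_n}{n+m+1}x^n=\frac{\sqrt{1-4x}}{2x}\bigl(\ln\sqrt{1-4x}-1\bigr)+\frac{0^m}{2x^{m+1}}+\frac{m}{4^mx^{m+1}}\sum_{j=0}^{m-1}(-1)^j\binom{m-1}{j}A_j(x), \] where \[ A_j(x)=\frac{(1-4x)^{j+3/2}}{2j+3}\Bigl(\ln\sqrt{1-4x}-\frac{2j+4}{2j+3}\Bigr)+\frac{2j+4}{(2j+3)^2}. \]
   Context: $O_n=\sum_{j=1}^n\frac1{2j-1}$ is the $n$th odd harmonic number ($O_0=0$). Convention: $0^0=1$ and $0^m=0$ for $m\ge1$; the sum over $j$ is empty (equal to $0$) when $m=0$. *)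

(* Defs.v *)
From Stdlib Require Import Reals.
From Coquelicot Require Import Coquelicot.
Open Scope R_scope.

Fixpoint oddH (n : nat) : R :=
  match n with
  | O => 0
  | S k => oddH k + / (2 * INR (S k) - 1)
  end.

Definition binom (n k : nat) : R := Binomial.C n k.

Fixpoint sum_lt (f : nat -> R) (m : nat) : R :=
  match m with
  | O => 0
  | S k => sum_lt f k + f k
  end.

Definition A_j (j : nat) (x : R) : R :=
  Rpower (1 - 4 * x) (INR j + 3 / 2) / (2 * INR j + 3)
    * (ln (sqrt (1 - 4 * x)) - (2 * INR j + 4) / (2 * INR j + 3))
  + (2 * INR j + 4) / (2 * INR j + 3) ^ 2.

(* Main.v *)
Require Import Defs.
From Stdlib Require Import Reals Lra Lia.
From Coquelicot Require Import Coquelicot.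
Open Scope R_scope.

Definition ce (n : nat) : R := binom (2 * n) n.
Definition cc (n : nat) : R := ce n * oddH n.

Lemma ce_rec n : ce (S n) * (INR n + 1) = ce n * (2 * (2 * INR n + 1)).
Proof.
  unfold ce, binom, Binomial.C.
  replace (2 * S n)%nat with (S (S (2 * n))) by lia.
  replace (S (S (2 * n)) - S n)%nat with (S n) by lia.
  replace (2 * n - n)%nat with n by lia.
  rewrite !fact_simpl. rewrite !mult_INR.
  rewrite !S_INR, mult_INR. simpl (INR 2).
  assert (H1 : INR (Factorial.fact n) <> 0) by (apply INR_fact_neq_0).
  assert (H2 : INR n + 1 <> 0) by (generalize (pos_INR n); lra).
  field. auto.
Qed.

Lemma ce_pos n : 0 < ce n.
Proof.
  unfold ce, binom, Binomial.C.
  apply Rdiv_lt_0_compat. apply INR_fact_lt_0.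
  apply Rmult_lt_0_compat; apply INR_fact_lt_0.
Qed.

Lemma ce_le n : ce n <= 4 ^ n.
Proof.
  induction n.
  - unfold ce, binom, Binomial.C. simpl. lra.
  - assert (E := ce_rec n). assert (Hn := pos_INR n).
    assert (ce (S n) = ce n * (2 * (2 * INR n + 1)) / (INR n + 1)).
    { rewrite <- E. field. lra. }
    rewrite H. simpl. 
    apply Rmult_le_reg_r with (INR n + 1). lra.
    unfold Rdiv. rewrite Rmult_assoc, Rinv_l by lra. rewrite Rmult_1_r.
    assert (Hc := ce_pos n). nra.
Qed.

Lemma oddH_bounds n : 0 <= oddH n <= INR n.
Proof.
  induction n.
  - simpl. lra.
  - change (oddH (S n)) with (oddH n + / (2 * INR (S n) - 1)). rewrite S_INR. assert (Hn := pos_INR n).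
    assert (0 < / (2 * (INR n + 1) - 1) <= 1).
    { split. apply Rinv_0_lt_compat. lra.
      rewrite <- Rinv_1. apply Rinv_le_contravar; lra. }
    lra.
Qed.
Lemma rad_of_disk a : (forall r, Rabs r < /4 -> CV_disk a r) ->
  forall x, Rabs x < /4 -> Rbar_lt (Rabs x) (CV_radius a).
Proof.
  intros H x Hx. assert (Ha := Rabs_pos x).
  set (r2 := (Rabs x + /4)/2).
  assert (Hr : Rbar_le r2 (CV_radius a)).
  { unfold CV_radius. destruct (Lub_Rbar_correct (CV_disk a)) as [Hub _].
    apply Hub. apply H. unfold r2. rewrite Rabs_pos_eq; lra. }
  apply Rbar_lt_le_trans with r2; auto. simpl. unfold r2. lra.
Qed.

Definition g4 (n : nat) : R := 4 ^ n.

Lemma disk_g4 r : Rabs r < /4 -> CV_disk g4 r.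
Proof.
  intros Hr. unfold CV_disk, g4.
  apply ex_series_ext with (fun n => (4 * Rabs r) ^ n).
  { intros n. rewrite Rabs_mult, <- !RPow_abs, Rpow_mult_distr.
    rewrite (Rabs_pos_eq 4) by lra. reflexivity. }
  apply ex_series_geom. rewrite Rabs_pos_eq. lra.
  generalize (Rabs_pos r); lra.
Qed.

Lemma disk_bound a : (forall n, Rabs (a n) <= PS_derive g4 n) ->
  forall r, Rabs r < /4 -> CV_disk a r.
Proof.
  intros H r Hr. unfold CV_disk.
  apply (@ex_series_le R_AbsRing R_CompleteNormedModule) with (fun n => Rabs (PS_derive g4 n * r ^ n)).
  { intros n. change norm with Rabs. rewrite Rabs_Rabsolu.
    rewrite !Rabs_mult. apply Rmult_le_compat_r. apply Rabs_pos.
    eapply Rle_trans. apply H. apply RRle_abs. }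
  apply CV_disk_inside. rewrite CV_radius_derive.
  apply rad_of_disk; auto. apply disk_g4.
Qed.

Lemma rad_bound a : (forall n, Rabs (a n) <= PS_derive g4 n) ->
  forall x, Rabs x < /4 -> Rbar_lt (Rabs x) (CV_radius a).
Proof. intros H. apply rad_of_disk. apply disk_bound; auto. Qed.

Lemma rad_incr_n a k : CV_radius (PS_incr_n a k) = CV_radius a.
Proof.
  induction k. reflexivity.
  change (CV_radius (PS_incr_1 (PS_incr_n a k)) = CV_radius a).
  rewrite CV_radius_incr_1. auto.
Qed.
Lemma minmax_abs y z : Rmin 0 y <= z <= Rmax 0 y -> Rabs z <= Rabs y.
Proof.
  unfold Rmin, Rmax. destruct (Rle_dec 0 y); intros [H1 H2];
  unfold Rabs; destruct (Rcase_abs z); destruct (Rcase_abs y); lra.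
Qed.

Lemma const_lemma (f df : R -> R) :
  (forall y, Rabs y < /4 -> is_derive f y (df y)) ->
  (forall y, Rabs y < /4 -> df y = 0) ->
  forall y, Rabs y < /4 -> f y = f 0.
Proof.
  intros Hd H0 y Hy.
  destruct (MVT_gen f 0 y df) as [c [Hc Heq]].
  - intros z Hz. apply Hd. assert (Rabs z <= Rabs y) by (apply minmax_abs; lra). lra.
  - intros z Hz. apply continuity_pt_filterlim. apply (@ex_derive_continuous R_AbsRing R_NormedModule).
    eexists. apply Hd. assert (Rabs z <= Rabs y) by (apply minmax_abs; lra). lra.
  - rewrite H0 in Heq. lra. assert (Rabs c <= Rabs y) by (apply minmax_abs; lra). lra.
Qed.

Lemma ode_lemma (W W' : R -> R) :
  (forall y, Rabs y < /4 -> is_derive W y (W' y)) ->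
  (forall y, Rabs y < /4 -> (1 - 4 * y) * W' y = 2 * W y) ->
  forall y, Rabs y < /4 -> W y * sqrt (1 - 4 * y) = W 0.
Proof.
  intros Hd Hode y Hy.
  replace (W 0) with (W 0 * sqrt (1 - 4 * 0)).
  2:{ replace (1 - 4 * 0) with 1 by ring. rewrite sqrt_1. ring. }
  apply (const_lemma (fun y => W y * sqrt (1 - 4 * y))
     (fun y => W' y * sqrt (1 - 4 * y) + W y * (-4 / (2 * sqrt (1 - 4 * y))))); auto.
  - intros z Hz. assert (Hu : 0 < 1 - 4 * z) by (apply Rabs_def2 in Hz; lra).
    apply (is_derive_mult W (fun y => sqrt (1 - 4 * y))). auto.
    apply (is_derive_sqrt (fun y => 1 - 4 * y)). auto_derive; auto. ring. auto.
    intros; apply Rmult_comm.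
  - intros z Hz. assert (Hu : 0 < 1 - 4 * z) by (apply Rabs_def2 in Hz; lra).
    assert (Hs : 0 < sqrt (1 - 4 * z)) by (apply sqrt_lt_R0; auto).
    assert (Hss := sqrt_sqrt (1 - 4 * z) (Rlt_le _ _ Hu)).
    assert (E := Hode z Hz).
    apply Rmult_eq_reg_r with (sqrt (1 - 4 * z)). 2: lra.
    field_simplify. 2: lra. simpl. rewrite Rmult_1_r, Hss.
    replace (2 * W' z * (1 - 4 * z) - 4 * W z) with (2 * ((1 - 4 * z) * W' z - 2 * W z)) by ring. rewrite E. field.
Qed.
Lemma series_ode (a q : nat -> R) (y : R) :
  Rbar_lt (Rabs y) (CV_radius a) -> Rbar_lt (Rabs y) (CV_radius q) ->
  (forall n, PS_derive a n = 4 * (INR n * a n) + 2 * a n + q n) ->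
  (1 - 4 * y) * PSeries (PS_derive a) y = 2 * PSeries a y + PSeries q y.
Proof.
  intros Ha Hq H.
  set (N := fun n => INR n * a n).
  assert (HN : forall n, N n = PS_incr_1 (PS_derive a) n).
  { intros [|n]; unfold N, PS_derive, PS_incr_1; simpl. change (zero : R) with 0. ring. reflexivity. }
  assert (RN : CV_radius N = CV_radius a).
  { rewrite (CV_radius_ext _ _ HN), CV_radius_incr_1, CV_radius_derive. auto. }
  assert (EN : ex_pseries N y) by (apply CV_radius_inside; rewrite RN; auto).
  assert (Ea : ex_pseries a y) by (apply CV_radius_inside; auto).
  assert (Eq : ex_pseries q y) by (apply CV_radius_inside; auto).
  assert (E1 : y * PSeries (PS_derive a) y = PSeries N y).
  { rewrite <- PSeries_incr_1. apply PSeries_ext. intros n. rewrite HN. reflexivity. }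
  assert (E2 : PSeries (PS_derive a) y = 4 * PSeries N y + 2 * PSeries a y + PSeries q y).
  { rewrite (PSeries_ext _ (PS_plus (PS_plus (PS_scal 4 N) (PS_scal 2 a)) q)).
    2:{ intros n. rewrite H. reflexivity. }
    assert (Hc : forall c : R, mult y c = mult c y) by (intros; apply Rmult_comm).
    rewrite PSeries_plus, PSeries_plus, !PSeries_scal; auto;
    repeat first [apply ex_pseries_plus | apply ex_pseries_scal | auto]. }
  replace ((1 - 4 * y) * PSeries (PS_derive a) y) with
    (PSeries (PS_derive a) y - 4 * (y * PSeries (PS_derive a) y)) by ring.
  rewrite E1, E2. ring.
Qed.
Lemma Rpower_split u j : 0 < u ->
  Rpower u (INR j + 3 / 2) = u ^ j * u * sqrt u.
Proof.
  intros Hu. replace (INR j + 3/2) with (INR (S j) + /2) by (rewrite S_INR; field).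
  rewrite Rpower_plus, Rpower_pow, Rpower_sqrt by auto. simpl. ring.
Qed.

Lemma A_derive j y : Rabs y < /4 ->
  is_derive (A_j j) y (-2 * (1 - 4 * y) ^ j * sqrt (1 - 4 * y) * (ln (sqrt (1 - 4 * y)) - 1)).
Proof.
  intros Hy. assert (Hu : 0 < 1 - 4 * y) by (apply Rabs_def2 in Hy; lra).
  unfold A_j, Rpower.
  auto_derive.
  - repeat split; auto. apply sqrt_lt_R0; auto.
  - replace (1 + - (4 * y)) with (1 - 4 * y) by ring.
    change (exp ((INR j + 3 / 2) * ln (1 - 4 * y))) with (Rpower (1 - 4 * y) (INR j + 3 / 2)).
    rewrite Rpower_split by auto.
    assert (Hs : 0 < sqrt (1 - 4 * y)) by (apply sqrt_lt_R0; auto).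
    assert (Hss := sqrt_sqrt (1 - 4 * y) (Rlt_le _ _ Hu)).
    set (L := ln (sqrt (1 - 4 * y))). set (s := sqrt (1 - 4 * y)) in *.
    rewrite <- Hss. assert (Hj := pos_INR j).
    field. lra.
Qed.

Lemma g4_D n : PS_derive g4 n = INR (S n) * 4 ^ (S n).
Proof. reflexivity. Qed.

Lemma ce_bound n : Rabs (ce n) <= PS_derive g4 n.
Proof.
  rewrite g4_D, Rabs_pos_eq by (apply Rlt_le, ce_pos).
  eapply Rle_trans. apply ce_le. rewrite S_INR. simpl.
  assert (Hn := pos_INR n). assert (H4 : 0 < 4 ^ n) by (apply pow_lt; lra). nra.
Qed.

Lemma cc_bound n : Rabs (cc n) <= PS_derive g4 n.
Proof.
  unfold cc. assert (Hc := ce_pos n). assert (Ho := oddH_bounds n).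
  assert (Hl := ce_le n).
  rewrite g4_D, Rabs_pos_eq by nra. rewrite S_INR. simpl.
  assert (Hn := pos_INR n). assert (H4 : 0 < 4 ^ n) by (apply pow_lt; lra).
  assert (ce n * oddH n <= 4 ^ n * INR n).
  { apply Rmult_le_compat; lra. }
  nra.
Qed.

Definition bb (m n : nat) : R := cc n / (INR n + INR m + 1).

Lemma bb_bound m n : Rabs (bb m n) <= PS_derive g4 n.
Proof.
  eapply Rle_trans. 2: apply cc_bound.
  unfold bb, Rdiv. rewrite Rabs_mult. 
  assert (Hn := pos_INR n). assert (Hm := pos_INR m).
  rewrite (Rabs_pos_eq (/ _)) by (apply Rlt_le, Rinv_0_lt_compat; lra).
  assert (/ (INR n + INR m + 1) <= 1).
  { rewrite <- Rinv_1. apply Rinv_le_contravar; lra. }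
  assert (Ha := Rabs_pos (cc n)). nra.
Qed.

Lemma ce_D n : PS_derive ce n = 4 * (INR n * ce n) + 2 * ce n + 0.
Proof.
  unfold PS_derive. rewrite S_INR, Rmult_comm, ce_rec. ring.
Qed.

Lemma cc_D n : PS_derive cc n = 4 * (INR n * cc n) + 2 * cc n + 2 * ce n.
Proof.
  unfold PS_derive, cc. rewrite S_INR.
  change (oddH (S n)) with (oddH n + / (2 * INR (S n) - 1)). rewrite S_INR.
  replace ((INR n + 1) * (ce (S n) * (oddH n + / (2 * (INR n + 1) - 1))))
    with (ce (S n) * (INR n + 1) * (oddH n + / (2 * (INR n + 1) - 1))) by ring.
  rewrite ce_rec. assert (Hn := pos_INR n). field. lra.
Qed.

Lemma rad_ce y : Rabs y < /4 -> Rbar_lt (Rabs y) (CV_radius ce).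
Proof. apply rad_bound, ce_bound. Qed.
Lemma rad_cc y : Rabs y < /4 -> Rbar_lt (Rabs y) (CV_radius cc).
Proof. apply rad_bound, cc_bound. Qed.
Lemma rad_bb m y : Rabs y < /4 -> Rbar_lt (Rabs y) (CV_radius (bb m)).
Proof. apply rad_bound, bb_bound. Qed.

Lemma ce0 : ce 0 = 1.
Proof. unfold ce, binom, Binomial.C. simpl. field. Qed.

Lemma rad_0 y : Rabs y < /4 -> Rbar_lt (Rabs y) (CV_radius (fun _ => 0)).
Proof.
  apply rad_bound. intros n. rewrite Rabs_R0, g4_D. apply Rmult_le_pos.
  apply pos_INR. apply pow_le; lra.
Qed.

Lemma rad_2ce y : Rabs y < /4 -> Rbar_lt (Rabs y) (CV_radius (fun n => 2 * ce n)).
Proof.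
  intros Hy. rewrite (CV_radius_ext _ (PS_scal 2 ce)) by reflexivity.
  rewrite CV_radius_scal by lra. apply rad_ce; auto.
Qed.

Lemma e_closed y : Rabs y < /4 -> PSeries ce y * sqrt (1 - 4 * y) = 1.
Proof.
  intros Hy. rewrite (ode_lemma (PSeries ce) (PSeries (PS_derive ce))); auto.
  - rewrite PSeries_0. apply ce0.
  - intros z Hz. apply is_derive_PSeries, rad_ce; auto.
  - intros z Hz. rewrite (series_ode ce (fun _ => 0) z).
    rewrite PSeries_const_0. ring. apply rad_ce; auto. apply rad_0; auto.
    apply ce_D.
Qed.

Lemma e_ode z : Rabs z < /4 ->
  (1 - 4 * z) * PSeries (PS_derive ce) z = 2 * PSeries ce z.
Proof.
  intros Hz. rewrite (series_ode ce (fun _ => 0) z).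
  rewrite PSeries_const_0. ring. apply rad_ce; auto. apply rad_0; auto.
  apply ce_D.
Qed.

Lemma F_ode z : Rabs z < /4 ->
  (1 - 4 * z) * PSeries (PS_derive cc) z = 2 * PSeries cc z + 2 * PSeries ce z.
Proof.
  intros Hz. rewrite (series_ode cc (fun n => 2 * ce n) z).
  rewrite (PSeries_ext (fun n => 2 * ce n) (PS_scal 2 ce)) by reflexivity. rewrite PSeries_scal. ring.
  apply rad_cc; auto. apply rad_2ce; auto. apply cc_D.
Qed.

Lemma F_closed y : Rabs y < /4 ->
  PSeries cc y * sqrt (1 - 4 * y) = - ln (sqrt (1 - 4 * y)).
Proof.
  intros Hy.
  assert (H := ode_lemma (fun z => PSeries cc z + PSeries ce z * ln (sqrt (1 - 4 * z)))
    (fun z => PSeries (PS_derive cc) z + (PSeries (PS_derive ce) z * ln (sqrt (1 - 4 * z))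
        + PSeries ce z * (-2 / (1 - 4 * z))))).
  assert (H0 : PSeries cc 0 + PSeries ce 0 * ln (sqrt (1 - 4 * 0)) = 0).
  { rewrite !PSeries_0, ce0. replace (1 - 4 * 0) with 1 by ring.
    rewrite sqrt_1, ln_1. unfold cc. simpl oddH. ring. }
  cbv beta in H. rewrite H0 in H. clear H0.
  assert (E := e_closed y Hy).
  assert (Hd : forall z, Rabs z < /4 -> is_derive (fun z => PSeries cc z + PSeries ce z * ln (sqrt (1 - 4 * z))) z
    (PSeries (PS_derive cc) z + (PSeries (PS_derive ce) z * ln (sqrt (1 - 4 * z))
        + PSeries ce z * (-2 / (1 - 4 * z))))).
  { intros z Hz. assert (Hu : 0 < 1 - 4 * z) by (apply Rabs_def2 in Hz; lra).
    apply (is_derive_plus (PSeries cc) (fun z => PSeries ce z * ln (sqrt (1 - 4 * z)))).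
    apply is_derive_PSeries, rad_cc; auto.
    apply (is_derive_mult (PSeries ce) (fun z => ln (sqrt (1 - 4 * z)))).
    apply is_derive_PSeries, rad_ce; auto.
    2: intros; apply Rmult_comm.
    auto_derive. repeat split; auto. apply sqrt_lt_R0; auto.
    assert (Hs : 0 < sqrt (1 - 4 * z)) by (apply sqrt_lt_R0; auto).
    assert (Hss := sqrt_sqrt (1 - 4 * z) (Rlt_le _ _ Hu)).
    replace (1 + - (4 * z)) with (1 - 4 * z) by ring.
    set (s := sqrt (1 - 4 * z)) in *. rewrite <- Hss. field. lra. }
  assert (Ho : forall z, Rabs z < /4 -> (1 - 4 * z) *
     (PSeries (PS_derive cc) z + (PSeries (PS_derive ce) z * ln (sqrt (1 - 4 * z))
        + PSeries ce z * (-2 / (1 - 4 * z)))) =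
     2 * (PSeries cc z + PSeries ce z * ln (sqrt (1 - 4 * z)))).
  { intros z Hz. assert (Hu : 0 < 1 - 4 * z) by (apply Rabs_def2 in Hz; lra).
    assert (E1 := F_ode z Hz). assert (E2 := e_ode z Hz).
    replace ((1 - 4 * z) *
     (PSeries (PS_derive cc) z + (PSeries (PS_derive ce) z * ln (sqrt (1 - 4 * z))
        + PSeries ce z * (-2 / (1 - 4 * z)))))
    with ((1 - 4 * z) * PSeries (PS_derive cc) z + ((1 - 4 * z) * PSeries (PS_derive ce) z) * ln (sqrt (1 - 4 * z))
        - 2 * PSeries ce z) by (field; lra).
    rewrite E1, E2. ring. }
  specialize (H Hd Ho y Hy).
  rewrite Rmult_plus_distr_r in H.
  replace (PSeries ce y * ln (sqrt (1 - 4 * y)) * sqrt (1 - 4 * y)) with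
    (PSeries ce y * sqrt (1 - 4 * y) * ln (sqrt (1 - 4 * y))) in H by ring.
  rewrite E in H. lra.
Qed.

Lemma sum_lt_derive (F : nat -> R -> R) (F' : nat -> R) k y :
  (forall j, (j < k)%nat -> is_derive (F j) y (F' j)) ->
  is_derive (fun z => sum_lt (fun j => F j z) k) y (sum_lt F' k).
Proof.
  induction k; intros H.
  - simpl. auto_derive; auto.
  - simpl. apply (is_derive_plus (fun z => sum_lt (fun j => F j z) k) (F k)).
    apply IHk. intros; apply H; lia. apply H; lia.
Qed.

Lemma sum_lt_ext f g k : (forall j, (j < k)%nat -> f j = g j) -> sum_lt f k = sum_lt g k.
Proof.
  induction k; intros H; simpl. reflexivity.
  rewrite IHk, H; auto.
Qed.

Lemma sum_lt_scal c f k : sum_lt (fun j => c * f j) k = c * sum_lt f k.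
Proof. induction k; simpl. ring. rewrite IHk. ring. Qed.

Lemma sum_lt_f_R0 f k : sum_lt f (S k) = sum_f_R0 f k.
Proof. induction k. simpl. ring. simpl sum_lt. simpl sum_f_R0. rewrite <- IHk. reflexivity. Qed.

Lemma sum_lt_zero f k : (forall j, (j < k)%nat -> f j = 0) -> sum_lt f k = 0.
Proof. induction k; intros H; simpl. reflexivity. rewrite IHk, H; auto. ring. Qed.

Definition Hf (m : nat) (y : R) : R :=
  y ^ m * sqrt (1 - 4 * y) * (ln (sqrt (1 - 4 * y)) - 1) / 2 + 0 ^ m / 2
  + INR m / 4 ^ m * sum_lt (fun j => (-1) ^ j * binom (m - 1) j * A_j j y) m.

Lemma Hf0 m : Hf m 0 = 0.
Proof.
  unfold Hf. replace (1 - 4 * 0) with 1 by ring. rewrite sqrt_1, ln_1.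
  rewrite sum_lt_zero.
  - destruct m; simpl; field. apply pow_nonzero; lra.
  - intros j _. unfold A_j. replace (1 - 4 * 0) with 1 by ring.
    rewrite sqrt_1, ln_1. unfold Rpower. rewrite ln_1, Rmult_0_r, exp_0.
    assert (Hj := pos_INR j). field. lra.
Qed.

Lemma sum_binom k u :
  sum_lt (fun j => binom k j * (- u) ^ j) (S k) = (1 - u) ^ k.
Proof.
  rewrite sum_lt_f_R0. replace (1 - u) with (- u + 1) by ring.
  rewrite binomial. apply sum_eq. intros i _. rewrite pow1. unfold binom. ring.
Qed.

Lemma H_derive m y : Rabs y < /4 ->
  is_derive (Hf m) y (y ^ m * (- ln (sqrt (1 - 4 * y)) / sqrt (1 - 4 * y))).
Proof.
  intros Hy. assert (Hu : 0 < 1 - 4 * y) by (apply Rabs_def2 in Hy; lra).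
  assert (Hs : 0 < sqrt (1 - 4 * y)) by (apply sqrt_lt_R0; auto).
  assert (Hss := sqrt_sqrt (1 - 4 * y) (Rlt_le _ _ Hu)).
  set (dsum := sum_lt (fun j => (-1) ^ j * binom (m - 1) j *
       (-2 * (1 - 4 * y) ^ j * sqrt (1 - 4 * y) * (ln (sqrt (1 - 4 * y)) - 1))) m).
  assert (D1 : is_derive (fun z => z ^ m * sqrt (1 - 4 * z) * (ln (sqrt (1 - 4 * z)) - 1) / 2) y
     (INR m * y ^ (pred m) * sqrt (1 - 4 * y) * (ln (sqrt (1 - 4 * y)) - 1) / 2
      - y ^ m * ln (sqrt (1 - 4 * y)) / sqrt (1 - 4 * y))).
  { auto_derive. repeat split; auto.
    replace (1 + - (4 * y)) with (1 - 4 * y) by ring.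
    field. lra. }
  assert (D2 : is_derive (fun z => INR m / 4 ^ m * sum_lt (fun j => (-1) ^ j * binom (m - 1) j * A_j j z) m) y
     (INR m / 4 ^ m * dsum)).
  { apply is_derive_scal.
    apply (sum_lt_derive (fun j z => (-1) ^ j * binom (m - 1) j * A_j j z)).
    intros j _. apply is_derive_scal. apply A_derive; auto. }
  assert (D := is_derive_plus _ _ y _ _ (is_derive_plus _ _ y _ _ D1 (is_derive_const (0 ^ m / 2) y)) D2).
  rewrite plus_zero_r in D. unfold Hf.
  replace (y ^ m * (- ln (sqrt (1 - 4 * y)) / sqrt (1 - 4 * y))) with
    ((INR m * y ^ (pred m) * sqrt (1 - 4 * y) * (ln (sqrt (1 - 4 * y)) - 1) / 2
      - y ^ m * ln (sqrt (1 - 4 * y)) / sqrt (1 - 4 * y)) + (INR m / 4 ^ m * dsum)).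
  exact D.
  destruct m as [|k].
  - simpl. field. lra.
  - assert (Ed : dsum = -2 * sqrt (1 - 4 * y) * (ln (sqrt (1 - 4 * y)) - 1) * (4 * y) ^ k).
    { unfold dsum. replace ((4 * y) ^ k) with ((1 - (1 - 4 * y)) ^ k) by (f_equal; ring).
      rewrite <- (sum_binom k (1 - 4 * y)).
      rewrite <- sum_lt_scal. apply sum_lt_ext. intros j _.
      replace (S k - 1)%nat with k by lia.
      replace (- (1 - 4 * y)) with ((-1) * (1 - 4 * y)) by ring.
      rewrite Rpow_mult_distr. ring. }
    rewrite Ed. simpl pred. rewrite Rpow_mult_distr. simpl (4 ^ S k).
    assert (H4 : 4 ^ k <> 0) by (apply pow_nonzero; lra).
    set (L := ln (sqrt (1 - 4 * y))). set (s := sqrt (1 - 4 * y)) in *.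
    simpl (y ^ S k). field. split; lra.
Qed.

Lemma PSD_incr m n : PS_derive (PS_incr_n (bb m) (S m)) n = PS_incr_n cc m n.
Proof.
  unfold PS_derive. rewrite !PS_incr_n_simplify.
  destruct (Compare_dec.le_lt_dec (S m) (S n)); destruct (Compare_dec.le_lt_dec m n);
    try lia.
  - replace (S n - S m)%nat with (n - m)%nat by lia. unfold bb.
    rewrite S_INR. replace (INR n) with (INR (n - m) + INR m) at 1
      by (rewrite minus_INR by lia; ring).
    assert (H := pos_INR (n - m)). assert (H2 := pos_INR m). field. lra.
  - change (zero : R) with 0. ring.
Qed.

Theorem theorem22 (m : nat) (x : R) (hx0 : 0 < Rabs x) (hx1 : Rabs x < / 4) :
  is_series
    (fun n : nat => binom (2 * n) n * (oddH n / (INR n + INR m + 1)) * x ^ n)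
    (sqrt (1 - 4 * x) / (2 * x) * (ln (sqrt (1 - 4 * x)) - 1)
     + 0 ^ m / (2 * x ^ (m + 1))
     + INR m / (4 ^ m * x ^ (m + 1))
       * sum_lt (fun j => (-1) ^ j * binom (m - 1) j * A_j j x) m).
Proof.
  assert (Hx : x <> 0) by (intro E; rewrite E, Rabs_R0 in hx0; lra).
  apply (is_series_ext (fun n => bb m n * x ^ n)).
  { intros n. unfold bb, cc, ce. apply (f_equal (fun t => t * x ^ n)). unfold Rdiv. apply Rmult_assoc. }
  assert (Ex : ex_series (fun n => bb m n * x ^ n)).
  { apply ex_pseries_R. apply CV_radius_inside, rad_bb; auto. }
  assert (Hs := Series_correct _ Ex).
  replace (sqrt (1 - 4 * x) / (2 * x) * (ln (sqrt (1 - 4 * x)) - 1)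
     + 0 ^ m / (2 * x ^ (m + 1))
     + INR m / (4 ^ m * x ^ (m + 1))
       * sum_lt (fun j => (-1) ^ j * binom (m - 1) j * A_j j x) m)
    with (Series (fun n => bb m n * x ^ n)); auto.
  change (Series (fun n => bb m n * x ^ n)) with (PSeries (bb m) x).
  assert (Q := const_lemma (fun y => PSeries (PS_incr_n (bb m) (S m)) y - Hf m y)
     (fun y => 0)).
  assert (Hd : forall y, Rabs y < /4 ->
     is_derive (fun y => PSeries (PS_incr_n (bb m) (S m)) y - Hf m y) y 0).
  { intros y Hy. assert (Hu : 0 < 1 - 4 * y) by (apply Rabs_def2 in Hy; lra).
    assert (Hsq : 0 < sqrt (1 - 4 * y)) by (apply sqrt_lt_R0; auto).
    assert (D1 : is_derive (PSeries (PS_incr_n (bb m) (S m))) y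
        (y ^ m * (- ln (sqrt (1 - 4 * y)) / sqrt (1 - 4 * y)))).
    { replace (y ^ m * (- ln (sqrt (1 - 4 * y)) / sqrt (1 - 4 * y))) with
         (PSeries (PS_derive (PS_incr_n (bb m) (S m))) y).
      apply is_derive_PSeries. rewrite rad_incr_n. apply rad_bb; auto.
      rewrite (PSeries_ext _ _ _ (PSD_incr m)), PSeries_incr_n.
      rewrite <- (F_closed y Hy). field. lra. }
    assert (D := is_derive_minus _ _ y _ _ D1 (H_derive m y Hy)).
    replace 0 with (minus (y ^ m * (- ln (sqrt (1 - 4 * y)) / sqrt (1 - 4 * y)))
       (y ^ m * (- ln (sqrt (1 - 4 * y)) / sqrt (1 - 4 * y)))).
    exact D. rewrite minus_eq_zero. reflexivity. }
  specialize (Q Hd (fun _ _ => eq_refl) x hx1). cbv beta in Q.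
  rewrite PSeries_0, Hf0, PSeries_incr_n in Q.
  rewrite PS_incr_n_simplify in Q. simpl in Q. change (zero : R) with 0 in Q.
  unfold Hf in Q. rewrite Nat.add_1_r.
  assert (Hxm : x ^ m <> 0) by (apply pow_nonzero; auto).
  assert (H4 : 4 ^ m <> 0) by (apply pow_nonzero; lra).
  apply Rmult_eq_reg_l with (x ^ S m). 2: apply pow_nonzero; auto.
  simpl (x ^ S m) in *. 
  set (S0 := sum_lt (fun j => (-1) ^ j * binom (m - 1) j * A_j j x) m) in *.
  set (P := PSeries (bb m) x) in *.
  set (L := ln (sqrt (1 - 4 * x))) in *. set (s := sqrt (1 - 4 * x)) in *.
  transitivity (x ^ m * s * (L - 1) / 2 + 0 ^ m / 2 + INR m / 4 ^ m * S0). lra. field. auto.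
Qed.
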